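(* Fix integers $n\ge k\ge 1$, put $m=n-k$, and fix a partition $\lambda=(\lambda_1\ge\lambda_2\ge\cdots\ge\lambda_k\ge 0)$ with $\lambda_1\le m$. There is a bijection $\Phi$ from the set of Condensed Catalan tableaux of size $(k,n)$ and shape $\lambda$ to the set of weighted Catalan paths constrained by $\lambda$ which is weight-preserving in the sense that, for every such tableau $T$, the product of all symbols $\alpha,\beta$ in the filling of $T$ equals the weight of the path $\Phi(T)$. (Equivalently, $\mathrm{wt}(T)=\alpha^{k}\beta^{n-k}\cdot \mathrm{wt}(\Phi(T))$.)
   Context: The Young diagram of $\lambda$ (English convention) consists of boxes $(r,c)$ with $1\le r\le k$, $1\le c\le\lambda_r$; row $1$ is the top row and column $1$ the leftmost. A Condensed Catalan tableau of size $(k,n)$ and shape $\lambda$ is an assignment to each box of $\lambda$ of one of: $\alpha$, $\beta$, or empty, such that: (ii) if box $(r,c)$ contains $\beta$, every box $(r,c')$ with $c'<c$ is empty; (iii) if box $(r,c)$ contains $\alpha$, every box $(r',c)$ with $r'<r$ is empty; (iv) every box $(r,c)$ such that there is no $\alpha$ in any box $(r',c)$ with $r'>r$ and no $\beta$ in any box $(r,c')$ with $c'>c$ contains $\alpha$ or $\beta$. Its weight is $\mathrm{wt}(T)=\alpha^{k+a}\beta^{n-k+b}$, where $a$ and $b$ are the numbers of $\alpha$'s and $\beta$'s in the filling. Place $\lambda$ in the rectangle $[0,m]\times[0,k]$ of the plane, box $(r,c)$ occupying $[c-1,c]\times[k-r,k-r+1]$, and let $L$ be the lattice path from $(m,k)$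 to $(0,0)$ with unit south and west steps following the southeast boundary of $\lambda$ (so, with $\lambda_0:=m$ and $\lambda_{k+1}:=0$, the horizontal part of $L$ at height $y=k-i$ is the segment from $x=\lambda_{i+1}$ to $x=\lambda_i$, $0\le i\le k$). A Catalan path constrained by $\lambda$ is a lattice path from $(m,k)$ to $(0,0)$ with unit south and west steps that never crosses $L$; equivalently, it is determined by integers $C_1\ge C_2\ge\cdots\ge C_k\ge 0$ with $C_i\le\lambda_i$ for all $i$, where the unique south step crossing row $i$ (from height $k-i+1$ to $k-i$) is at $x=C_i$. Each step receives a label: a south step with $x>0$ (not on the west boundary of $\lambda$) gets $\beta$; a south step with $x=0$ gets $1$; a west step lying strictly above $L$ gets $\alpha$; a west step lying on $L$ gets $1$. The weight of the (weighted Catalan) path is the product of the labels of its steps. *)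

(* Defs.v *)
From HB Require Import structures.
From mathcomp Require Import all_boot.
Set Implicit Arguments. Unset Strict Implicit. Unset Printing Implicit Defensive.

Inductive sym := Alpha | Beta.
Definition sym2b (s : sym) : bool := if s is Alpha then true else false.
Definition b2sym (b : bool) : sym := if b then Alpha else Beta.
Lemma sym2bK : cancel sym2b b2sym. Proof. by case. Qed.
HB.instance Definition _ := Equality.copy sym (can_type sym2bK).

(* Conventions (0-based): row r : 'I_k stands for row r+1, column c : 'I_m
   for column c+1, lam r stands for lambda_{r+1}.  The box (r,c) lies in
   the Young diagram iff c < lam r.  A filling is a finite function on the
   k x m rectangle; None = empty box. *)

Definition is_CCT (k m : nat) (lam : 'I_k -> nat)
    (T : {ffun 'I_k * 'I_m -> option sym}) : bool :=
  [&&
      [forall r : 'I_k, forall c : 'I_m, (~~ (c < lam r)) ==> (T (r, c) == None)],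
      [forall r : 'I_k, forall c : 'I_m, (T (r, c) == Some Beta) ==>
          [forall c' : 'I_m, (c' < c) ==> (T (r, c') == None)]],
      [forall r : 'I_k, forall c : 'I_m, (T (r, c) == Some Alpha) ==>
          [forall r' : 'I_k, (r' < r) ==> (T (r', c) == None)]] &
      [forall r : 'I_k, forall c : 'I_m,
          [&& c < lam r,
              ~~ [exists r' : 'I_k, (r < r') && (T (r', c) == Some Alpha)] &
              ~~ [exists c' : 'I_m, (c < c') && (T (r, c') == Some Beta)]]
          ==> (T (r, c) != None)]].

(* Exponents of alpha and beta contributed by the filling:
   the product of all symbols of T is alpha^(tab_a T) beta^(tab_b T). *)
Definition tab_a k m (T : {ffun 'I_k * 'I_m -> option sym}) : nat :=
  #|[pred b | T b == Some Alpha]|.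
Definition tab_b k m (T : {ffun 'I_k * 'I_m -> option sym}) : nat :=
  #|[pred b | T b == Some Beta]|.

(* Extension of a row-indexed sequence f_1..f_k (stored 0-based) to indices
   0..k+1 with f_0 := m and f_{k+1} := 0 (and 0 beyond). *)
Definition ext (k m : nat) (f : 'I_k -> nat) (i : nat) : nat :=
  if i is j.+1 then (if insub j is Some o then f o else 0) else m.

(* A Catalan path constrained by lambda, encoded by C_1 >= ... >= C_k >= 0,
   C_i <= lambda_i; C i is the x-coordinate of the south step crossing
   row i+1.  Values lie in [0, m]. *)
Definition is_cpath (k m : nat) (lam : 'I_k -> nat)
    (C : {ffun 'I_k -> 'I_m.+1}) : bool :=
  [forall i : 'I_k, forall j : 'I_k, (i <= j) ==> (C j <= C i)]
  && [forall i : 'I_k, C i <= lam i].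

(* The unit west step [x-1,x] at height k-i (0 <= i <= k, 1 <= x <= m)
   lies on L iff it is contained in the horizontal segment of L at height
   k-i, namely [lambda_{i+1}, lambda_i]. *)
Definition onL (k m : nat) (lam : 'I_k -> nat) (i x : nat) : bool :=
  (ext m lam i.+1 <= x.-1) && (x <= ext m lam i).

(* The path has the west step [x-1,x] at height k-i iff C_{i+1} < x <= C_i
   (with C_0 = m, C_{k+1} = 0).  It is labelled alpha iff not on L
   (i.e. strictly above L), else 1. *)
Definition path_a (k m : nat) (lam : 'I_k -> nat)
    (C : {ffun 'I_k -> 'I_m.+1}) : nat :=
  #|[pred p : 'I_k.+1 * 'I_m |
      let i := val p.1 in let x := (val p.2).+1 in
      [&& ext m (fun j => val (C j)) i.+1 < x,
          x <= ext m (fun j => val (C j)) i &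
          ~~ onL m lam i x]]|.

(* South step crossing row i+1 is at x = C i; labelled beta iff x > 0. *)
Definition path_b (k m : nat) (C : {ffun 'I_k -> 'I_m.+1}) : nat :=
  #|[pred i : 'I_k | 0 < C i]|.
(* The weight of the path is alpha^(path_a) beta^(path_b). *)

(* Main.v *)
Require Import Defs.
From HB Require Import structures.
From mathcomp Require Import all_boot zify.
Set Implicit Arguments. Unset Strict Implicit. Unset Printing Implicit Defensive.

Arguments ext : simpl never.
Arguments onL : simpl never.

Lemma card_prefix n p : p <= n -> #|[pred i : 'I_n | i < p]| = p.
Proof.
elim: p => [|p IH] hp.
  by apply: eq_card0 => i.
have hpn : p < n by [].
rewrite (cardD1 (Ordinal hpn)) inE /= ltnSn add1n -[in RHS]IH ?(ltnW hp) //.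
congr S; apply: eq_card => i; rewrite !inE -val_eqE /= ltnS ltn_neqAle.
by [].
Qed.

Lemma card_dclosed n (S : {pred 'I_n}) :
  (forall i j : 'I_n, j <= i -> i \in S -> j \in S) ->
  forall x : 'I_n, (x < #|S|) = (x \in S).
Proof.
move=> hS x; apply/idP/idP => [hx|xS].
  case: (boolP (x \in S)) => // xS.
  have : #|S| <= x.
    rewrite -(card_prefix (ltnW (ltn_ord x))).
    apply/subset_leq_card/subsetP => i iS; rewrite inE.
    by rewrite ltnNge; apply/negP => le; by rewrite (hS _ _ le iS) in xS.
  by rewrite leqNgt hx.
rewrite -(card_prefix (ltn_ord x)).
apply/subset_leq_card/subsetP => i; rewrite inE => hi.
by apply: hS xS; rewrite -ltnS.
Qed.
Section Main.
Variables (k m : nat) (lam : 'I_k -> nat).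
Hypothesis mono : forall i j : 'I_k, i <= j -> lam j <= lam i.
Hypothesis lam_m : forall i, lam i <= m.

Definition N (f : 'I_k -> nat) (x : nat) := #|[pred r : 'I_k | x < f r]|.
Definition Phi0 (f : 'I_k -> nat) (i : 'I_k) : nat := #|[pred c : 'I_m | i < N f c]|.

Lemma N_le_k f x : N f x <= k.
Proof. by apply: leq_trans (max_card _) _; rewrite card_ord. Qed.

Lemma N_decr f x y : x <= y -> N f y <= N f x.
Proof.
move=> xy; apply/subset_leq_card/subsetP => r; rewrite !inE => h.
exact: leq_ltn_trans xy h.
Qed.

Lemma N_mono f g x : (forall r, f r <= g r) -> N f x <= N g x.
Proof.
move=> fg; apply/subset_leq_card/subsetP => r; rewrite !inE => h.
exact: leq_trans h (fg r).
Qed.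

Lemma Phi0_le f i : Phi0 f i <= m.
Proof. by apply: leq_trans (max_card _) _; rewrite card_ord. Qed.

Lemma Phi0_spec f i x : x < m -> (x < Phi0 f i) = (i < N f x).
Proof.
move=> hx; have := @card_dclosed m [pred c : 'I_m | i < N f c].
move=> /(_ _ (Ordinal hx)) /= ->.
  by rewrite inE.
move=> a b ba; rewrite !inE => h; exact: leq_trans h (N_decr f ba).
Qed.

Lemma N_Phi0 f : (forall r, f r <= m) -> forall x, N (Phi0 f) x = N f x.
Proof.
move=> hf x; case: (ltnP x m) => hx.
  rewrite /N -[RHS](card_prefix (N_le_k f x)); apply: eq_card => i.
  by rewrite !inE Phi0_spec.
rewrite /N; transitivity 0.
  apply: eq_card0 => i; rewrite inE; apply/negbTE; rewrite -leqNgt.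
  exact: leq_trans (Phi0_le f i) hx.
apply/esym/eq_card0 => i; rewrite inE; apply/negbTE; rewrite -leqNgt.
exact: leq_trans (hf i) hx.
Qed.

Lemma Phi0_decr f (i j : 'I_k) : i <= j -> Phi0 f j <= Phi0 f i.
Proof.
move=> ij; apply/subset_leq_card/subsetP => c; rewrite !inE => h.
exact: leq_ltn_trans ij h.
Qed.

Lemma N_decr_spec (C : 'I_k -> nat) :
  (forall i j : 'I_k, i <= j -> C j <= C i) ->
  forall x (i : 'I_k), (i < N C x) = (x < C i).
Proof.
move=> hC x i; rewrite /N card_dclosed ?inE //.
move=> a b ba; rewrite !inE => h; exact: leq_trans h (hC _ _ ba).
Qed.

Lemma Phi0_lam f : (forall r, f r <= lam r) -> forall i, Phi0 f i <= lam i.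
Proof.
move=> hf i; rewrite -[X in _ <= X](card_prefix (lam_m i)).
apply/subset_leq_card/subsetP => c; rewrite !inE => h.
rewrite -(N_decr_spec mono); exact: leq_trans h (N_mono _ hf).
Qed.

Lemma Phi0_id (C : 'I_k -> nat) :
  (forall i j : 'I_k, i <= j -> C j <= C i) -> (forall i, C i <= m) ->
  forall i, Phi0 C i = C i.
Proof.
move=> hC hm i; rewrite /Phi0 -[RHS](card_prefix (hm i)); apply: eq_card => c.
by rewrite !inE (N_decr_spec hC).
Qed.

Lemma W1 f g x : (forall r, f r <= g r) ->
  [exists r, (f r <= x) && (x < g r)] = (N f x < N g x).
Proof.
move=> fg; have sub : [pred r | x < f r] \subset [pred r | x < g r].
  by apply/subsetP => r; rewrite !inE => h; exact: leq_trans h (fg r).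
rewrite /N; apply/existsP/idP => [[r /andP[h1 h2]]|].
  apply: proper_card; rewrite properE sub /=; apply/subsetPn; exists r.
    by rewrite inE.
  by rewrite inE -leqNgt.
move=> hlt; have : ~~ ([pred r | x < g r] \subset [pred r | x < f r]).
  by apply/negP => /subset_leq_card; rewrite leqNgt hlt.
move/subsetPn => [r]; rewrite !inE => h1 h2; exists r.
by rewrite h1 andbT leqNgt.
Qed.


Definition Pb (b : 'I_k -> nat) :=
  forall s t : 'I_k, t < s -> ~~ ((b s < b t) && (b t <= lam s)).

Lemma cnt_eq_of_N b1 b2 : (forall x, N b1 x = N b2 x) ->
  forall v, #|[pred r | b1 r == v]| = #|[pred r | b2 r == v]|.
Proof.
move=> hN v.
have hge : forall b, #|[pred r : 'I_k | v <= b r]| =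
    #|[pred r | b r == v]| + N b v.
  move=> b; rewrite -(cardID [pred r | v < b r] [pred r | v <= b r]) addnC.
  congr (_ + _); apply: eq_card => r; rewrite !inE.
    by case: ltngtP => // ->; rewrite eqxx.
  by case: ltngtP.
have hall : #|[pred r : 'I_k | v <= b1 r]| = #|[pred r : 'I_k | v <= b2 r]|.
  case: v {hge} => [|v]; last exact: hN.
  by apply: eq_card => r; rewrite !inE.
by move: hall; rewrite !hge hN => /addIn.
Qed.

Lemma key_uniq b1 b2 (s : 'I_k) : Pb b1 -> b2 s <= lam s ->
  (forall v, #|[pred r | b1 r == v]| = #|[pred r | b2 r == v]|) ->
  (forall t : 'I_k, s < t -> b1 t = b2 t) -> b2 s <= b1 s.
Proof.
move=> P1 h2 hc hagree; rewrite leqNgt; apply/negP => lt.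
set v := b2 s.
have split b : #|[pred r | b r == v]| =
   #|[pred r : 'I_k | (r <= s) && (b r == v)]| + #|[pred r : 'I_k | (s < r) && (b r == v)]|.
  rewrite -(cardID [pred r : 'I_k | r <= s] [pred r | b r == v]).
  congr (_ + _); apply: eq_card => r; rewrite !inE.
    by rewrite andbC.
  by rewrite ltnNge andbC.
have e2 : #|[pred r : 'I_k | (s < r) && (b1 r == v)]| =
          #|[pred r : 'I_k | (s < r) && (b2 r == v)]|.
  apply: eq_card => r; rewrite !inE.
  by case: (ltnP s r) => //= h; rewrite hagree.
have := hc v; rewrite !split e2 => /addIn e1.
have : 0 < #|[pred r : 'I_k | (r <= s) && (b1 r == v)]|.
  by rewrite e1; apply/card_gt0P; exists s; rewrite inE leqnn eqxx.
case/card_gt0P => t; rewrite inE => /andP[ts /eqP bt].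
have tns : t != s by apply/eqP => ets; move: bt lt; rewrite ets => ->; rewrite ltnn.
have ts' : t < s by rewrite ltn_neqAle ts andbT.
by move: (P1 s t ts'); rewrite bt lt h2.
Qed.

Lemma uniq_b b1 b2 : Pb b1 -> Pb b2 ->
  (forall r, b1 r <= lam r) -> (forall r, b2 r <= lam r) ->
  (forall x, N b1 x = N b2 x) -> forall r, b1 r = b2 r.
Proof.
move=> P1 P2 h1 h2 hN.
have hc := cnt_eq_of_N hN.
have hc' : forall v, #|[pred r | b2 r == v]| = #|[pred r | b1 r == v]|.
  by move=> v; rewrite hc.
suff : forall d (s : 'I_k), k - d <= s -> b1 s = b2 s.
  by move=> H r; apply: (H k); rewrite subnn.
elim=> [|d IH] s hs.
  by move: hs (ltn_ord s); rewrite subn0 leqNgt => /negbTE ->.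
case: (leqP (k - d) s) => hsd; first exact: IH.
have agr : forall t : 'I_k, s < t -> b1 t = b2 t.
  move=> t st; apply: IH; move: hs st; clear; move: (nat_of_ord s) (nat_of_ord t) => a b; lia.
apply/eqP; rewrite eqn_leq; apply/andP; split.
  apply: key_uniq => // t st; exact/esym/agr.
exact: key_uniq.
Qed.


Lemma card_invol (f : 'I_k -> 'I_k) (p : pred 'I_k) : cancel f f ->
  #|[pred r | p (f r)]| = #|[pred r | p r]|.
Proof.
move=> fK; rewrite -(card_image (can_inj fK)); apply: eq_card => y.
by rewrite -{1}(fK y) (mem_image (can_inj fK)) ?inE /= fK.
Qed.

Lemma card_lt_ord (s : 'I_k) : #|[pred t : 'I_k | t < s]| = s.
Proof. exact: card_prefix (ltnW (ltn_ord s)). Qed.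

Definition Inv (C : 'I_k -> nat) j (b : 'I_k -> nat) :=
  [/\ forall x, N b x = N C x,
      forall s : 'I_k, k - j <= s -> b s <= lam s /\
         forall t : 'I_k, t < s -> ~~ ((b s < b t) && (b t <= lam s)) &
      forall x, #|[pred t : 'I_k | (t < k - j) && (x < b t)]| <=
                #|[pred t : 'I_k | (t < k - j) && (x < lam t)]| ].

Lemma Inv_step C j b : j < k -> Inv C j b -> exists b', Inv C j.+1 b'.
Proof.
move=> jk [ha hb hc].
have sk : k - j.+1 < k by lia.
set s := Ordinal sk.
have kjs : k - j = s.+1 by rewrite /=; lia.
have kj1 : k - j.+1 = s by [].
rewrite kjs in hb hc; rewrite /Inv kj1.
have ex : [exists t0 : 'I_k, (t0 <= s) && (b t0 <= lam s)].
  case: (boolP [exists t0 : 'I_k, (t0 <= s) && (b t0 <= lam s)]) => // /existsPn hno.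
  have := hc (lam s).
  have -> : #|[pred t : 'I_k | (t < s.+1) && (lam s < b t)]| = s.+1.
    rewrite -[RHS](card_prefix (ltn_ord s)); apply: eq_card => t.
    rewrite !inE ltnS; case: (leqP t s) => //= ts.
    by move: (hno t); rewrite ts /= -ltnNge.
  move=> H; suff : #|[pred t : 'I_k | (t < s.+1) && (lam s < lam t)]| <= s.
    by rewrite leqNgt H.
  rewrite -[X in _ <= X]card_lt_ord.
  apply/subset_leq_card/subsetP => t; rewrite !inE ltnS => /andP[ts lt].
  rewrite ltn_neqAle ts andbT; apply/eqP => ets.
  by move: lt; rewrite (val_inj ets) ltnn.
case/existsP: ex => t0 Pt0.
have [ta [/andP[tss tsl] tsmax]] : exists ta : 'I_k, ((ta <= s) && (b ta <= lam s)) /\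
    forall t : 'I_k, (t <= s) && (b t <= lam s) -> b t <= b ta.
  by case: (@arg_maxnP _ t0 (fun i : 'I_k => (i <= s) && (b i <= lam s)) b Pt0) => ta h1 h2; exists ta.
pose sw (r : 'I_k) := if r == s then ta else if r == ta then s else r.
have swK : cancel sw sw.
  move=> r; rewrite /sw; case: (eqVneq r s) => [->|rs].
    by case: (eqVneq ta s) => [->|tas]; rewrite ?eqxx // eq_refl.
  case: (eqVneq r ta) => [->|rta]; first by rewrite eqxx.
  by rewrite (negbTE rs) (negbTE rta).
have swle : forall t : 'I_k, t <= s -> sw t <= s.
  by move=> t ht; rewrite /sw; case: eqP => // _; case: eqP.
have swlt : forall t : 'I_k, (sw t <= s) = (t <= s).
  move=> t; apply/idP/idP; last exact: swle.
  by move=> /swle; rewrite swK.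
have swgt : forall t : 'I_k, s < t -> sw t = t.
  move=> t st; rewrite /sw; case: eqP => [ets|_].
    by move: st; rewrite ets ltnn.
  case: eqP => // ett; move: st; rewrite ett ltnNge tss.
  done.
exists (fun r => b (sw r)); split.
- move=> x; rewrite -ha /N; exact: (card_invol [pred r | x < b r] swK).
- move=> s' hs'; case: (eqVneq s' s) => [->|ns].
    rewrite /sw eqxx; split => // t ts; apply/negP => /andP[lt le].
    have := tsmax (sw t); rewrite swle ?(ltnW ts) ?le //= => /(_ isT).
    by rewrite leqNgt lt.
  have ss' : s < s' by rewrite ltn_neqAle eq_sym ns.
  have [h1 h2] := hb s' ss'.
  rewrite swgt //; split => // t ts'.
  apply: h2; case: (leqP t s) => hts.
    exact: leq_ltn_trans (swle _ hts) ss'.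
  by rewrite swgt.
- move=> x; case: (leqP (lam s) x) => hx.
    apply: leq_trans (_ : #|[pred t : 'I_k | (t < s.+1) && (x < b (sw t))]| <= _).
      by apply/subset_leq_card/subsetP => t; rewrite !inE => /andP[h1 ->]; rewrite andbT ltnW.
    have -> : #|[pred t : 'I_k | (t < s.+1) && (x < b (sw t))]| =
              #|[pred t : 'I_k | (t < s.+1) && (x < b t)]|.
      rewrite -(card_invol [pred t : 'I_k | (t < s.+1) && (x < b t)] swK).
      by apply: eq_card => t; rewrite !inE !ltnS swlt.
    apply: leq_trans (hc x) _; apply/subset_leq_card/subsetP => t.
    rewrite !inE ltnS => /andP[ts lt]; rewrite lt andbT ltn_neqAle ts andbT.
    by apply/eqP => ets; move: lt hx; rewrite (val_inj ets) => /leq_trans h /h; rewrite ltnn.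
  have -> : #|[pred t : 'I_k | (t < s) && (x < lam t)]| = s.
    rewrite -[RHS]card_lt_ord; apply: eq_card => t; rewrite !inE.
    case: (ltnP t s) => //= ts; apply/idP; exact: leq_trans hx (@mono t s (ltnW ts)).
  rewrite -[X in _ <= X]card_lt_ord; apply/subset_leq_card/subsetP => t.
  by rewrite !inE => /andP[].
Qed.

Lemma exists_b (C : 'I_k -> nat) : (forall r, C r <= lam r) ->
  exists b, [/\ forall x, N b x = N C x, forall s, b s <= lam s & Pb b].
Proof.
move=> hC.
suff : forall j, j <= k -> exists b, Inv C j b.
  case/(_ k (leqnn k)) => b [ha hb _]; exists b; split => //.
    by move=> s; case: (hb s); rewrite ?subnn.
  by move=> s t ts; case: (hb s); rewrite ?subnn // => _; apply.
elim=> [|j IH] hj.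
  exists C; split => //.
    by move=> s; rewrite subn0 leqNgt ltn_ord.
  move=> x; apply/subset_leq_card/subsetP => t; rewrite !inE => /andP[-> h].
  exact: leq_trans h (hC t).
case: (IH (ltnW hj)) => b hb; exact: Inv_step hj hb.
Qed.


Definition tabT := {ffun 'I_k * 'I_m -> option sym}.

Lemma CCT_E (T : tabT) : is_CCT lam T ->
  [/\ forall r (c : 'I_m), ~~ (c < lam r) -> T (r, c) = None,
      forall r (c c' : 'I_m), T (r, c) = Some Beta -> c' < c -> T (r, c') = None,
      forall (r r' : 'I_k) (c : 'I_m), T (r, c) = Some Alpha -> r' < r -> T (r', c) = None &
      forall r (c : 'I_m), c < lam r ->
        (forall r' : 'I_k, r < r' -> T (r', c) <> Some Alpha) ->
        (forall c' : 'I_m, c < c' -> T (r, c') <> Some Beta) -> T (r, c) <> None].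
Proof.
case/and4P => /forallP h1 /forallP h2 /forallP h3 /forallP h4; split.
- by move=> r c hc; move/forallP: (h1 r) => /(_ c); rewrite hc => /eqP.
- move=> r c c' hb lt; move/forallP: (h2 r) => /(_ c); rewrite hb eqxx /=.
  by move=> /forallP /(_ c'); rewrite lt => /eqP.
- move=> r r' c ha lt; move/forallP: (h3 r) => /(_ c); rewrite ha eqxx /=.
  by move=> /forallP /(_ r'); rewrite lt => /eqP.
- move=> r c hc na nb; move/forallP: (h4 r) => /(_ c); rewrite hc /=.
  have -> : ~~ [exists r' : 'I_k, (r < r') && (T (r', c) == Some Alpha)].
    by apply/existsPn => r'; apply/negP => /andP[lt /eqP]; exact: na.
  have -> : ~~ [exists c' : 'I_m, (c < c') && (T (r, c') == Some Beta)].
    by apply/existsPn => c'; apply/negP => /andP[lt /eqP]; exact: nb.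
  by move=> /= /eqP.
Qed.

Lemma CCT_I (T : tabT) :
  (forall r (c : 'I_m), ~~ (c < lam r) -> T (r, c) = None) ->
  (forall r (c c' : 'I_m), T (r, c) = Some Beta -> c' < c -> T (r, c') = None) ->
  (forall (r r' : 'I_k) (c : 'I_m), T (r, c) = Some Alpha -> r' < r -> T (r', c) = None) ->
  (forall r (c : 'I_m), c < lam r ->
        (forall r' : 'I_k, r < r' -> T (r', c) <> Some Alpha) ->
        (forall c' : 'I_m, c < c' -> T (r, c') <> Some Beta) -> T (r, c) <> None) ->
  is_CCT lam T.
Proof.
move=> h1 h2 h3 h4; apply/and4P; split.
- by apply/forallP => r; apply/forallP => c; apply/implyP => hc; rewrite h1.
- apply/forallP => r; apply/forallP => c; apply/implyP => /eqP hb.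
  by apply/forallP => c'; apply/implyP => lt; rewrite (h2 _ _ _ hb lt).
- apply/forallP => r; apply/forallP => c; apply/implyP => /eqP ha.
  by apply/forallP => r'; apply/implyP => lt; rewrite (h3 _ _ _ ha lt).
- apply/forallP => r; apply/forallP => c; apply/implyP => /and3P[hc na nb].
  apply/eqP; apply: h4 => // [r' lt|c' lt] e.
    by move/existsP: na; apply; exists r'; rewrite lt e.
  by move/existsP: nb; apply; exists c'; rewrite lt e.
Qed.


Lemma ex_max (p : pred 'I_k) : (exists i, p i) ->
  exists i, p i /\ forall j, p j -> j <= i.
Proof.
case=> i pi; case: (arg_maxnP (fun j : 'I_k => nat_of_ord j) pi) => j pj h.
by exists j.
Qed.

Definition bpos (T : tabT) (r : 'I_k) : nat :=
  if [pick c : 'I_m | T (r, c) == Some Beta] is Some c then c.+1 else 0.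

Definition isA (b : 'I_k -> nat) (r : 'I_k) (c : 'I_m) : bool :=
  [&& c < lam r, b r <= c &
      [forall r' : 'I_k, ((r < r') && (c < lam r')) ==> (c < b r')]].

Definition Tb (b : 'I_k -> nat) : tabT :=
  [ffun p : 'I_k * 'I_m => if b p.1 == p.2.+1 then Some Beta
             else if isA b p.1 p.2 then Some Alpha else None].

Lemma bposE (T : tabT) : is_CCT lam T ->
  forall r (c : 'I_m), (bpos T r == c.+1) = (T (r, c) == Some Beta).
Proof.
case/CCT_E => _ h2 _ _ r c; rewrite /bpos; case: pickP => [c' /eqP hc'|hn].
  rewrite eqSS; apply/eqP/eqP => [e|hb]; first by rewrite -(val_inj e).
  case: (ltngtP c c') => [lt|lt|e]; last by rewrite e.
    by move: (h2 _ _ _ hc' lt); rewrite hb.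
  by move: (h2 _ _ _ hb lt); rewrite hc'.
by rewrite (hn c).
Qed.

Lemma bpos_le (T : tabT) : is_CCT lam T -> forall r, bpos T r <= lam r.
Proof.
move=> hT r; have [h1 _ _ _] := CCT_E hT; rewrite /bpos.
case: pickP => // c /eqP hc; rewrite ltnNge; apply/negP => hn.
by have := h1 r c; rewrite -leqNgt hn hc => /(_ isT).
Qed.

Lemma bpos_m (T : tabT) r : bpos T r <= m.
Proof. by rewrite /bpos; case: pickP. Qed.

Lemma bpos_gt0 (T : tabT) r : 0 < bpos T r ->
  exists c : 'I_m, bpos T r = c.+1.
Proof. by rewrite /bpos; case: pickP => // c _ _; exists c. Qed.

Lemma Pb_CCT (T : tabT) : is_CCT lam T -> Pb (bpos T).
Proof.
move=> hT s t ts; apply/negP => /andP[lt le].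
have [c hc] := bpos_gt0 (leq_ltn_trans (leq0n _) lt).
have [h1 h2 h3 h4] := CCT_E hT.
have hbt : T (t, c) = Some Beta by apply/eqP; rewrite -bposE // hc.
have cl : c < lam s by rewrite -ltnS -hc.
case E : (T (s, c)) => [[]|].
- move: (h3 _ _ _ E ts); by rewrite hbt.
- by move: lt; rewrite hc; move/eqP: E; rewrite -bposE // => /eqP ->; rewrite ltnn.
- apply: (h4 s c cl) => // [r' sr' ha|c' cc' hb].
    by move: (h3 _ _ _ ha (ltn_trans ts sr')); rewrite hbt.
  have : bpos T s = c'.+1 by apply/eqP; rewrite bposE // hb.
  by move=> e; move: lt; rewrite e hc ltnS => /(ltn_trans cc'); rewrite ltnn.
Qed.


Lemma alpha_isA (T : tabT) : is_CCT lam T -> forall r c,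
  T (r, c) = Some Alpha -> isA (bpos T) r c.
Proof.
move=> hT r c ha; have [h1 h2 h3 h4] := CCT_E hT.
have cl : c < lam r.
  by case: (boolP (c < lam r)) => // hn; rewrite h1 in ha.
apply/and3P; split => //.
  rewrite leqNgt; apply/negP => lt.
  have [c' hc'] := bpos_gt0 (leq_ltn_trans (leq0n _) lt).
  move: lt; rewrite hc' ltnS leq_eqVlt => /orP[/eqP e|lt].
    have : T (r, c') = Some Beta by apply/eqP; rewrite -bposE // hc'.
    by rewrite -(val_inj e) ha.
  have hb : T (r, c') = Some Beta by apply/eqP; rewrite -bposE // hc'.
  by move: (h2 _ _ _ hb lt); rewrite ha.
apply/forallP => r'; apply/implyP => /andP[rr' cl'].
rewrite ltnNge; apply/negP => le.
case E : (T (r', c)) => [[]|].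
- by move: (h3 _ _ _ E rr'); rewrite ha.
- by move/eqP: E; rewrite -bposE // => /eqP e; move: le; rewrite e ltnn.
- apply: (h4 r' c cl') => // [r'' lt ha''|c'' lt hb].
    by move: (h3 _ _ _ ha'' (ltn_trans rr' lt)); rewrite ha.
  have : bpos T r' = c''.+1 by apply/eqP; rewrite bposE // hb.
  by move=> e; move: le; rewrite e => le'; move: (leq_trans le' (ltnW lt)); rewrite ltnn.
Qed.

Lemma isA_alpha (T : tabT) : is_CCT lam T -> forall r c,
  isA (bpos T) r c -> T (r, c) = Some Alpha.
Proof.
move=> hT r c /and3P[cl bl /forallP hf]; have [h1 h2 h3 h4] := CCT_E hT.
case E : (T (r, c)) => [[]|] //.
- by move/eqP: E; rewrite -bposE // => /eqP e; move: bl; rewrite e ltnn.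
- exfalso; apply: (h4 r c cl) => // [r' lt ha|c' lt hb].
    have := alpha_isA hT ha; case/and3P => cl' bl' _.
    by move: (hf r'); rewrite lt cl' /= ltnNge bl'.
  have : bpos T r = c'.+1 by apply/eqP; rewrite bposE // hb.
  by move=> e; move: bl; rewrite e => le'; move: (leq_trans le' (ltnW lt)); rewrite ltnn.
Qed.

Lemma Tb_bpos (T : tabT) : is_CCT lam T -> T = Tb (bpos T).
Proof.
move=> hT; apply/ffunP => [[r c]]; rewrite ffunE /=.
case E : (T (r, c)) => [[]|].
- rewrite (_ : bpos T r == c.+1 = false) ?(alpha_isA hT E) //.
  by rewrite bposE // E.
- by rewrite bposE // E.
- rewrite bposE // E /=; case: (boolP (isA _ _ _)) => // h.
  by rewrite (isA_alpha hT h) in E.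
Qed.


Lemma TbE b (r : 'I_k) (c : 'I_m) : Tb b (r, c) =
  if b r == c.+1 then Some Beta else if isA b r c then Some Alpha else None.
Proof. by rewrite ffunE. Qed.

Lemma bpos_Tb b : (forall r, b r <= lam r) -> forall r, bpos (Tb b) r = b r.
Proof.
move=> hb r; rewrite /bpos; case: pickP => [c|hn].
  rewrite TbE; case: (eqVneq (b r) c.+1) => [-> //|_]; by case: isA.
case E : (b r) => [//|v].
have vm : v < m by have := hb r; rewrite E => /leq_trans; apply.
by move: (hn (Ordinal vm)); rewrite TbE E eqxx.
Qed.

Lemma Tb_CCT b : Pb b -> (forall r, b r <= lam r) -> is_CCT lam (Tb b).
Proof.
move=> hP hb; apply: CCT_I.
- move=> r c hc; rewrite TbE; case: eqP => [e|_].
    by move: (hb r); rewrite e => hh; move: hc; rewrite hh.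
  by rewrite /isA (negbTE hc).
- move=> r c c' ; rewrite TbE; case: eqP => e; last by case: isA.
  move=> _ lt.
  rewrite TbE e eqSS (_ : (c == c' :> nat) = false); last first.
    by apply/negbTE; rewrite neq_ltn lt orbT.
  rewrite /isA e (_ : c.+1 <= c' = false) ?andbF //.
  by apply/negbTE; rewrite -leqNgt; exact: ltnW lt.
- move=> r r' c; rewrite TbE; case: eqP => // ne.
  case hA : (isA b r c) => // _ lt; case/and3P: hA => cl bl /forallP hf.
  rewrite TbE; case: eqP => [e|_].
    by move: (hP r r' lt); rewrite e ltnS bl cl.
  case hA' : (isA b r' c) => //; case/and3P: hA' => _ _ /forallP /(_ r).
  by rewrite lt cl /= ltnNge bl.
- move=> r c cl na nb; rewrite TbE; case: eqP => // ne.
  case hA : (isA b r c) => //.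
  have br : b r <= c.
    rewrite leqNgt; apply/negP => lt.
    have hm : (b r).-1 < m.
      by have := hb r; have := lam_m r; move: lt; clear; lia.
    apply: (nb (Ordinal hm)) => /=.
      by move: lt ne; clear; lia.
    rewrite TbE /= prednK ?eqxx //; by move: lt; clear; lia.
  have : exists r' : 'I_k, [&& r < r', c < lam r' & b r' <= c].
    move/negbT: hA; rewrite /isA cl br /= => /forallPn [r'].
    by rewrite negb_imply -leqNgt => /andP[/andP[h1 h2] h3]; exists r'; rewrite h1 h2.
  case/ex_max => r' [/and3P[rr' cl' bl'] hmax].
  exfalso; apply: (na r' rr'); rewrite TbE.
  rewrite (_ : (b r' == c.+1) = false); last by apply/negbTE; rewrite neq_ltn ltnS bl'.
  rewrite /isA cl' bl' /=; suff -> : [forall r'' : 'I_k, (r' < r'') && (c < lam r'') ==> (c < b r'')] by [].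
  apply/forallP => r''; apply/implyP => /andP[lt cl''].
  rewrite ltnNge; apply/negP => bl''.
  have := hmax r''; rewrite (ltn_trans rr' lt) cl'' bl'' => /(_ isT).
  by rewrite leqNgt lt.
Qed.


Lemma TbA b (r : 'I_k) (c : 'I_m) : (Tb b (r, c) == Some Alpha) = isA b r c.
Proof.
rewrite TbE; case: (eqVneq (b r) c.+1) => [e|_]; last by case: isA.
by rewrite /isA e ltnn andbF.
Qed.

Lemma TbB b (r : 'I_k) (c : 'I_m) : (Tb b (r, c) == Some Beta) = (b r == c.+1).
Proof. by rewrite TbE; case: (eqVneq (b r) c.+1) => // _; case: isA. Qed.

Lemma tab_a_Tb b : tab_a (Tb b) =
  #|[pred c : 'I_m | [exists r, (b r <= c) && (c < lam r)]]|.
Proof.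
rewrite /tab_a -(card_in_image (f := snd)).
  apply: eq_card => c; rewrite inE; apply/imageP/existsP.
    case=> [[r c'] hA ->] /=; move: hA; rewrite inE TbA => /and3P[h1 h2 _].
    by exists r; rewrite h1 h2.
  case=> r0 hr0; have [r [/andP[h1 h2] hmax]] := @ex_max (fun i : 'I_k => (b i <= c) && (c < lam i)) (ex_intro _ r0 hr0).
  exists (r, c) => //; rewrite inE TbA /isA h1 h2 /=.
  apply/forallP => r'; apply/implyP => /andP[lt cl'].
  rewrite ltnNge; apply/negP => bl.
  by have := hmax r'; rewrite bl cl' /= => /(_ isT); rewrite leqNgt lt.
move=> [r c] [r' c']; rewrite !inE !TbA /= => hA hA' ec; subst c'.
case/and3P: hA => cl bl /forallP hf; case/and3P: hA' => cl' bl' /forallP hf'.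
case: (ltngtP r r') => [lt|lt|/val_inj -> //].
  by move: (hf r'); rewrite lt cl' /= ltnNge bl'.
by move: (hf' r); rewrite lt cl /= ltnNge bl.
Qed.

Lemma tab_b_Tb b : (forall r, b r <= lam r) ->
  tab_b (Tb b) = #|[pred r : 'I_k | 0 < b r]|.
Proof.
move=> hb; rewrite /tab_b -(card_in_image (f := fst)).
  apply: eq_card => r; rewrite inE; apply/imageP/idP.
    by case=> [[r' c] hB ->] /=; move: hB; rewrite inE TbB => /eqP ->.
  move=> pos.
  have hm : (b r).-1 < m by have := hb r; have := lam_m r; move: pos; clear; lia.
  exists (r, Ordinal hm) => //; rewrite inE TbB /= prednK //.
move=> [r c] [r' c']; rewrite !inE !TbB /= => /eqP e /eqP e' er; subst r'.
by congr pair; apply/val_inj; move: e'; rewrite e => -[].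
Qed.


Lemma extS (f : 'I_k -> nat) (j : 'I_k) : ext m f j.+1 = f j.
Proof. by rewrite /ext /= valK. Qed.

Lemma extS' (f : 'I_k -> nat) i (hi : i < k) : ext m f i.+1 = f (Ordinal hi).
Proof. exact: (extS f (Ordinal hi)). Qed.

Lemma ext0 (f : 'I_k -> nat) : ext m f 0 = m.
Proof. by []. Qed.

Lemma ext_out (f : 'I_k -> nat) j : k <= j -> ext m f j.+1 = 0.
Proof. by move=> h; rewrite /ext /= insubF // ltnNge h. Qed.

Lemma path_a_eq (C : {ffun 'I_k -> 'I_m.+1}) : is_cpath lam C ->
  path_a lam C = #|[pred x : 'I_m | [exists r, (val (C r) <= x) && (x < lam r)]]|.
Proof.
case/andP => /forallP hmono /forallP hle.
set Cv := fun j => val (C j).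
have hdec : forall i j : 'I_k, i <= j -> Cv j <= Cv i.
  by move=> i j ij; move/forallP: (hmono i) => /(_ j); rewrite ij.
have hCl : forall i, Cv i <= lam i by move=> i; exact: hle.
have hCm : forall i, Cv i <= m by move=> i; rewrite /Cv -ltnS ltn_ord.
have ext_dec : forall i j, i <= j -> ext m Cv j <= ext m Cv i.
  move=> [|i] [|j] // ij.
    case: (ltnP j k) => hj; last by rewrite ext_out.
    by rewrite (_ : j.+1 = (Ordinal hj : nat).+1) // extS hCm.
  case: (ltnP j k) => hj; last by rewrite ext_out.
  have hi : i < k by exact: leq_trans ij hj.
  rewrite (_ : j.+1 = (Ordinal hj : nat).+1) // (_ : i.+1 = (Ordinal hi : nat).+1) //.
  by rewrite !extS; apply: hdec.
rewrite /path_a -(card_in_image (f := snd)).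
  apply: eq_card => x; rewrite inE; apply/imageP/existsP.
    case=> [[i x'] hA ->] /=; move: hA; rewrite inE /= => /and3P[h1 h2 h3].
    have xl : x' < ext m lam i.
      move: h1 h2 h3; case: i => [[|i] hi] /= h1 h2 h3; first by rewrite ext0.
      have ik : i < k by [].
      move: h2; rewrite !(extS' _ ik) => h2; exact: leq_trans h2 (hCl _).
    move: h3; rewrite /onL /= negb_and -!ltnNge ltnS (leqNgt (ext m lam i) x') xl orbF => h3.
    have ik : (i : nat) < k.
      by rewrite ltnNge; apply/negP => ki; move: h3; rewrite ext_out.
    by exists (Ordinal ik); move: h1 h3; rewrite !(extS' _ ik) ltnS => -> ->.
  case=> r /andP[cr xr].
  have spec := N_decr_spec hdec.
  move Ei : (N Cv x) => i.
  have ir : i <= r by rewrite -Ei leqNgt spec -leqNgt.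
  have h2 : x < ext m Cv i.
    move: Ei ir; case: i => [|i] Ei ir; first by rewrite ext0.
    have i'k : i < k by exact: leq_ltn_trans (ltnW ir) (ltn_ord r).
    by rewrite (extS' _ i'k) -(spec x (Ordinal i'k)) Ei.
  have ik : i < k by exact: leq_ltn_trans ir (ltn_ord r).
  have ik1 : i < k.+1 by exact: ltnW.
  exists (Ordinal ik1, x) => //; rewrite inE /=.
  apply/and3P; split.
  - by rewrite (extS' _ ik) ltnS leqNgt -(spec x (Ordinal ik)) Ei ltnn.
  - exact: h2.
  - rewrite /onL /= negb_and; apply/orP; left; rewrite -ltnNge.
    rewrite (extS' _ ik); exact: leq_trans xr (@mono (Ordinal ik) r ir).
move=> [i x] [i' x']; rewrite !inE /= => /andP[h1 /andP[h2 _]] /andP[h1' /andP[h2' _]] ex.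
subst x'; apply/eqP; rewrite xpair_eqE eqxx andbT.
case: (ltngtP i i') => [lt|lt|/val_inj -> //].
  by have := leq_ltn_trans (leq_trans h2' (ext_dec _ _ lt)) h1; rewrite ltnn.
by have := leq_ltn_trans (leq_trans h2 (ext_dec _ _ lt)) h1'; rewrite ltnn.
Qed.

End Main.

Lemma N_ext k (f g : 'I_k -> nat) : f =1 g -> forall x, N f x = N g x.
Proof. by move=> h x; apply: eq_card => r; rewrite !inE h. Qed.

Lemma Phi0_N k m (f g : 'I_k -> nat) : (forall x, N f x = N g x) ->
  forall i, Phi0 m f i = Phi0 m g i.
Proof. by move=> h i; apply: eq_card => c; rewrite !inE h. Qed.

Lemma Tb_ext k m lam (b1 b2 : 'I_k -> nat) : b1 =1 b2 ->
  @Tb k m lam b1 = @Tb k m lam b2.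
Proof.
move=> h; apply/ffunP => [[r c]]; rewrite !TbE /isA h.
have -> : [forall r' : 'I_k, (r < r') && (c < lam r') ==> (c < b1 r')] =
          [forall r' : 'I_k, (r < r') && (c < lam r') ==> (c < b2 r')].
  by apply: eq_forallb => r'; rewrite h.
by [].
Qed.

Theorem proposition3p1 (n k : nat) (hk : 1 <= k) (hkn : k <= n)
    (lam : 'I_k -> nat)
    (hlam_mono : forall i j : 'I_k, i <= j -> lam j <= lam i)
    (hlam1 : forall i : 'I_k, val i = 0 -> lam i <= n - k) :
  exists Phi : {ffun 'I_k * 'I_(n - k) -> option sym} ->
               {ffun 'I_k -> 'I_(n - k).+1},
    [/\ forall T, is_CCT lam T -> is_cpath lam (Phi T),
        forall T1 T2, is_CCT lam T1 -> is_CCT lam T2 ->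
          Phi T1 = Phi T2 -> T1 = T2,
        forall C, is_cpath lam C -> exists2 T, is_CCT lam T & Phi T = C &
        forall T, is_CCT lam T ->
          (tab_a T, tab_b T) = (path_a lam (Phi T), path_b (Phi T))].
Proof.
have lam_m : forall i, lam i <= n - k.
  move=> i; apply: leq_trans (hlam_mono (Ordinal hk) i (leq0n _)) _.
  exact: hlam1.
pose Phi (T : {ffun 'I_k * 'I_(n - k) -> option sym}) : {ffun 'I_k -> 'I_(n - k).+1} :=
  [ffun i => inord (Phi0 (n - k) (bpos T) i)].
have PhiE : forall T i, val (Phi T i) = Phi0 (n - k) (bpos T) i.
  by move=> T i; rewrite ffunE; apply: inordK; rewrite ltnS Phi0_le.
have cpath : forall T, is_CCT lam T -> is_cpath lam (Phi T).
  move=> T hT; apply/andP; split.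
    apply/forallP => i; apply/forallP => j; apply/implyP => ij.
    by rewrite !PhiE Phi0_decr.
  apply/forallP => i; rewrite PhiE; apply: Phi0_lam => //.
  exact: bpos_le hT.
exists Phi; split.
- exact: cpath.
- move=> T1 T2 h1 h2 e.
  have eP : forall i, Phi0 (n - k) (bpos T1) i = Phi0 (n - k) (bpos T2) i.
    by move=> i; rewrite -!PhiE e.
  have eN : forall x, N (bpos T1) x = N (bpos T2) x.
    move=> x; rewrite -(N_Phi0 (@bpos_m _ _ T1)) -(N_Phi0 (@bpos_m _ _ T2)).
    exact: N_ext.
  have eb := uniq_b (Pb_CCT h1) (Pb_CCT h2) (bpos_le h1) (bpos_le h2) eN.
  by rewrite (Tb_bpos h1) (Tb_bpos h2); apply: Tb_ext.
- move=> C hC.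
  have hCl : forall r, val (C r) <= lam r.
    by move=> r; case/andP: hC => _ /forallP; apply.
  have hdec : forall i j : 'I_k, i <= j -> val (C j) <= val (C i).
    by move=> i j ij; case/andP: hC => /forallP /(_ i) /forallP /(_ j); rewrite ij.
  have hCm : forall i, val (C i) <= n - k by move=> i; rewrite -ltnS ltn_ord.
  have [b [hN hbl hP]] := exists_b hlam_mono hCl.
  exists (Tb (n - k) lam b); first exact (Tb_CCT lam_m hP hbl).
  apply/ffunP => i; apply: val_inj; rewrite PhiE.
  rewrite (@Phi0_N _ (n - k) _ _ (N_ext (bpos_Tb lam_m hbl))) (@Phi0_N _ (n - k) _ _ hN).
  exact: Phi0_id hdec hCm i.
- move=> T hT.
  have hbl := bpos_le hT.
  have hPl : forall r, val (Phi T r) <= lam r by move=> r; rewrite PhiE (Phi0_lam hlam_mono lam_m hbl).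
  rewrite (path_a_eq hlam_mono (cpath T hT)) {1 2}(Tb_bpos hT).
  rewrite tab_a_Tb (tab_b_Tb lam_m hbl); congr pair.
    apply: eq_card => x; rewrite !inE.
    rewrite (W1 _ hbl) (W1 _ hPl); congr (_ < _).
    rewrite -(N_Phi0 (@bpos_m _ _ T)); apply: N_ext => r; by rewrite PhiE.
  rewrite /path_b; transitivity (N (bpos T) 0); first by [].
  rewrite -(N_Phi0 (@bpos_m _ _ T)); apply: eq_card => r.
  by rewrite !inE PhiE.
Qed.
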